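(* Let $\mathscr N$ be a weakly reversible chemical reaction network. If $\mathscr N=\mathscr N_1\cup\cdots\cup\mathscr N_k$ is an incidence independent decomposition, then each subnetwork $\mathscr N_i$ is weakly reversible, i.e., the decomposition is weakly reversible.
   Context: A chemical reaction network (CRN) $\mathscr N=(\mathscr S,\mathscr C,\mathscr R)$ consists of: - a finite set $\mathscr S$ of species; - a finite set $\mathscr C\subseteq\mathbb R^{\mathscr S}_{\ge0}$ of complexes; - a set $\mathscr R\subseteq\mathscr C\times\mathscr C$ of reactions, viewed as a directed graph on $\mathscr C$, with no reaction $y\to y$ and every complex occurring in some reaction. The network is weakly reversible if each of its linkage classes (connected components of the underlying undirected graph) is strongly connected. A decomposition $\mathscr N=\mathscr N_1\cup\cdots\cup\mathscr N_k$ is the set of subnetworks induced by a partition $\{\mathscr R_1,\ldots,\mathscr R_k\}$ of $\mathscr R$; $\mathscr N_i$ has reactions $\mathscr R_i$ and the complexes occurring in them. A decomposition is weakly reversible if every subnetwork is weakly reversible. The incidence map is $I_a:\mathbb R^{\mathscr R}\to\mathbb R^{\mathscr C}$, sending the basis vector of $y\to y'$ to $\omega_{y'}-\omega_y$. The decomposition is incidence independent if $\operatorname{Im}I_a$ is the direct sum of the images of the restrictions $I_{a,i}$ of $I_a$ to $\mathbb R^{\mathscr R_i}$. Equivalently, $n-l=\sum_i(n_i-l_i)$, with $n$ and $l$ the numbers of complexes and linkage classes of $\mathscr N$, and $n_i$ and $l_i$ those of $\mathscr N_i$. *)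

(* Defs.v *)
From HB Require Import structures.
From mathcomp Require Import all_boot all_order all_algebra.
From mathcomp Require Import reals.
Set Implicit Arguments. Unset Strict Implicit. Unset Printing Implicit Defensive.
Import Order.TTheory GRing.Theory Num.Theory.
Local Open Scope ring_scope.

(* A CRN with species type S and n complexes, indexed by 'I_n.
   Complex i is the vector cplx i in R^S (nonnegative, pairwise distinct).
   Reactions are pairs (i, j) meaning  cplx i -> cplx j. *)
Definition is_CRN (R : realType) (S : finType) (n : nat)
    (cplx : 'I_n -> {ffun S -> R}) (Rset : {set 'I_n * 'I_n}) : Prop :=
  [/\ injective cplx,
      (forall i s, 0 <= cplx i s),
      (forall p, p \in Rset -> p.1 != p.2) &
      (forall i : 'I_n, exists2 p, p \in Rset & (p.1 == i) || (p.2 == i))].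

(* Directed reaction graph and its underlying undirected graph
   (for the network/subnetwork with reaction set B; complexes not occurring
   in B are isolated and only connected to themselves). *)
Definition react_rel n (B : {set 'I_n * 'I_n}) : rel 'I_n :=
  fun x y => (x, y) \in B.
Definition undir_rel n (B : {set 'I_n * 'I_n}) : rel 'I_n :=
  fun x y => ((x, y) \in B) || ((y, x) \in B).

(* Weakly reversible: each linkage class (connected component of the
   underlying undirected graph) is strongly connected. *)
Definition weakly_reversible n (B : {set 'I_n * 'I_n}) : Prop :=
  forall x y : 'I_n, connect (undir_rel B) x y -> connect (react_rel B) x y.

(* Matrix of the incidence map restricted to R^B: rows indexed by all pairs
   of complexes; the row of a reaction (y, y') in B is w_{y'} - w_y, other
   rows are 0.  Its row space is Im I_{a,B}. *)
Definition incmx (R : realType) n (B : {set 'I_n * 'I_n})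
    : 'M[R]_(#|{: 'I_n * 'I_n}|, n) :=
  \matrix_(i, j)
    (let p := enum_val i in
     if p \in B then ((p.2 == j)%:R - (p.1 == j)%:R) else 0).

Definition incidence_independent (R : realType) n
    (P : {set {set 'I_n * 'I_n}}) (Rset : {set 'I_n * 'I_n}) : Prop :=
  (incmx R Rset :=: \sum_(B in P) <<incmx R B>>)%MS
  /\ mxdirect (\sum_(B in P) <<incmx R B>>)%MS.

(* Main.v *)
Require Import Defs.
From HB Require Import structures.
From mathcomp Require Import all_boot all_order all_algebra.
From mathcomp Require Import reals.
Set Implicit Arguments. Unset Strict Implicit. Unset Printing Implicit Defensive.
Import Order.TTheory GRing.Theory Num.Theory.
Local Open Scope ring_scope.

Section Aux.
Variables (R : realType) (n : nat).

Definition dl (k : 'I_n) : 'rV[R]_n := \row_j (k == j)%:R.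
Definition de (e : 'I_n * 'I_n) : 'rV[R]_n := dl e.2 - dl e.1.

Lemma tele (z : 'I_n) p :
  \sum_(e <- zip (z :: p) p) de e = dl (last z p) - dl z.
Proof.
elim: p z => [|w p IH] z /=; first by rewrite big_nil subrr.
by rewrite big_cons IH /de /= addrC addrA subrK.
Qed.

Lemma path_edges (r : rel 'I_n) z p :
  path r z p -> forall e, e \in zip (z :: p) p -> r e.1 e.2.
Proof.
elim: p z => [|w p IH] z //= /andP[rzw pw] e.
rewrite inE => /orP[/eqP -> //|]; exact: IH.
Qed.

Lemma de_sub (B : {set 'I_n * 'I_n}) e :
  e \in B -> (de e <= <<incmx R B>>)%MS.
Proof.
move=> eB; rewrite genmxE; apply: (eq_row_sub (enum_rank e)).
apply/rowP => j; rewrite !mxE enum_rankK /= eB /de /dl ?mxE; exact: erefl.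
Qed.

Definition F (Y : {set 'I_n}) (v : 'rV[R]_n) : R := \sum_(j in Y) v 0 j.

Lemma F_sum Y (s : seq ('I_n * 'I_n)) (Q : pred ('I_n * 'I_n)) :
  F Y (\sum_(e <- s | Q e) de e) = \sum_(e <- s | Q e) F Y (de e).
Proof.
apply: (big_morph (F Y)).
  by move=> u v; rewrite /F -big_split; apply: eq_bigr => j _; rewrite mxE.
by rewrite /F big1 // => j _; rewrite mxE.
Qed.

Lemma F_dl Y k : F Y (dl k) = (k \in Y)%:R.
Proof.
rewrite /F; case: (boolP (k \in Y)) => kY.
  rewrite (bigD1 k) //= mxE eqxx big1 ?addr0 // => j /andP[_ jk].
  by rewrite mxE eq_sym (negbTE jk).
by rewrite big1 // => j jY; rewrite mxE; case: eqP => // ek; rewrite ek jY in kY.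
Qed.

Lemma F_de Y e : F Y (de e) = (e.2 \in Y)%:R - (e.1 \in Y)%:R.
Proof.
rewrite /de -!F_dl /F -sumrB; apply: eq_bigr => j _; by rewrite !mxE.
Qed.

End Aux.

Theorem mainTheorem5 (R : realType) (S : finType) (n : nat)
    (cplx : 'I_n -> {ffun S -> R}) (Rset : {set 'I_n * 'I_n})
    (P : {set {set 'I_n * 'I_n}}) :
  is_CRN cplx Rset ->
  weakly_reversible Rset ->
  partition P Rset ->
  incidence_independent R P Rset ->
  forall B, B \in P -> weakly_reversible B.
Proof.
move=> _ wr /and3P[/eqP covP _ _] [_ /mxdirect_sumsP dir] B BP.
have BR : forall e, e \in B -> e \in Rset.
  by move=> e eB; rewrite -covP; apply/bigcupP; exists B.
have keyL : forall a b, (a, b) \in B -> connect (react_rel B) b a.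
  move=> a b abB; apply/negPn/negP => nba.
  set Y := [set z | connect (react_rel B) b z].
  have : connect (undir_rel Rset) b a.
    by apply: connect1; apply/orP; right; exact: BR.
  move/wr/connectP => [p pth lst].
  set s := (a, b) :: zip (b :: p) p.
  have sR : forall e, e \in s -> e \in Rset.
    move=> e; rewrite inE => /orP[/eqP -> |]; first exact: BR.
    by move=> es; have := path_edges pth es; rewrite /react_rel -surjective_pairing.
  have s0 : \sum_(e <- s) de R e = 0.
    by rewrite big_cons tele -lst /de /= addrC addrA subrK subrr.
  pose vB := \sum_(e <- s | e \in B) de R e.
  pose vr := \sum_(e <- s | e \notin B) de R e.
  have svr : vB + vr = 0 by rewrite -s0 (bigID (mem B)).
  have vBsub : (vB <= <<incmx R B>>)%MS.
    by apply: summx_sub => e eB; exact: de_sub.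
  have vrsub : (vr <= \sum_(C | (C \in P) && (C != B)) <<incmx R C>>)%MS.
    rewrite /vr big_seq_cond; apply: summx_sub => e /andP[es eB].
    have := sR e es; rewrite -covP => /bigcupP[C CP eC].
    apply: (sumsmx_sup C); first by rewrite CP /=; apply: contraNneq eB => <-.
    exact: de_sub.
  have vB0 : vB = 0.
    apply/eqP; rewrite -submx0 -(dir B BP) sub_capmx vBsub.
    have -> : vB = - vr by apply/eqP; rewrite -addr_eq0 svr.
    by rewrite eqmx_opp.
  have : F Y vB = 0 by rewrite vB0 /F big1 // => j _; rewrite mxE.
  rewrite /vB F_sum big_cons abB F_de /= !inE connect0.
  rewrite (negbTE nba) subr0 => h.
  have : 0 <= \sum_(e <- zip (b :: p) p | e \in B) F Y (de R e).
    apply: sumr_ge0 => e eB; rewrite F_de !inE.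
    case: (boolP (connect _ b e.1)) => h1.
      have -> : connect (react_rel B) b e.2.
        apply: connect_trans h1 _; apply: connect1; by rewrite /react_rel -surjective_pairing.
      by rewrite subrr.
    by rewrite subr0 ler0n.
  move=> Sge; have h1 : (true%:R : R) = 1 by [].
  move: h; rewrite h1 => h.
  have : (0:R) < 1 + \sum_(e <- zip (b :: p) p | e \in B) F Y (de R e).
    by rewrite (lt_le_trans ltr01) // lerDl.
  by rewrite h ltxx.
have : subrel (undir_rel B) (connect (react_rel B)).
  move=> x y /orP[h|h]; first exact: connect1.
  exact: keyL.
by move=> sub x y; apply: connect_sub.
Qed.
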